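(* Let $(E,\|\cdot\|)$ be a real Banach space, $I=[a,b]$ a closed real interval, $E_0=C(I,E)$ the space of continuous functions $\varphi:I\to E$ with the supremum norm $\|\varphi\|_0=\sup\{\|\varphi(t)\|: t\in I\}$ and metric $D(\varphi,\xi)=\|\varphi-\xi\|_0$, fix $c\in I$, and let $\mathcal{R}_c=\{\varphi\in E_0: \|\varphi\|_0=\|\varphi(c)\|\}$. Let $\mathcal{K}$ be the set of constant functions in $E_0$. Suppose $\mathcal{R}_c$ is algebraically closed, i.e. $\varphi,\xi\in\mathcal{R}_c$ implies $\varphi-\xi\in\mathcal{R}_c$ (equivalently, $\mathcal{R}_c$ is additive). Then $\mathcal{R}_c=\mathcal{K}$; hence $\mathcal{R}_c$ is also $D$-closed in $E_0$. *)

(* Defs.v *)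
From HB Require Import structures.
From mathcomp Require Import all_boot all_order all_algebra.
From mathcomp Require Import all_classical all_reals all_analysis.
Set Implicit Arguments. Unset Strict Implicit. Unset Printing Implicit Defensive.
Import Order.TTheory GRing.Theory Num.Theory.
Import numFieldNormedType.Exports.
Local Open Scope classical_set_scope.
Local Open Scope ring_scope.

(* Elements of E_0 = C([a,b], E) are represented by functions R -> E that are
   continuous on [a,b]; only their values on [a,b] matter for all notions below. *)
Definition E0 (R : realType) (E : completeNormedModType R) (a b : R)
  : set (R -> E) := [set phi | {within `[a, b], continuous phi}].

Definition supnorm (R : realType) (E : completeNormedModType R) (a b : R)
  (phi : R -> E) : R := sup [set `|phi t| | t in `[a, b]].

Definition Dist (R : realType) (E : completeNormedModType R) (a b : R)
  (phi xi : R -> E) : R := supnorm a b (phi \- xi).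

Definition Rc (R : realType) (E : completeNormedModType R) (a b c : R)
  : set (R -> E) := [set phi | E0 a b phi /\ supnorm a b phi = `|phi c|].

Definition Kconst (R : realType) (E : completeNormedModType R) (a b : R)
  : set (R -> E) :=
  [set phi | E0 a b phi /\ exists v : E, forall t, t \in `[a, b] -> phi t = v].

Definition D_closed (R : realType) (E : completeNormedModType R) (a b : R)
  (S : set (R -> E)) : Prop :=
  forall phi, E0 a b phi ->
    (forall eps : R, 0 < eps -> exists2 psi, S psi & Dist a b phi psi < eps) ->
    S phi.

(* Main.v *)
Require Import Defs.
From HB Require Import structures.
From mathcomp Require Import all_boot all_order all_algebra.
From mathcomp Require Import all_classical all_reals all_analysis.
Import Order.TTheory GRing.Theory Num.Theory.
Import numFieldNormedType.Exports.
Local Open Scope classical_set_scope.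
Local Open Scope ring_scope.

Lemma bnd (R : realType) (E : completeNormedModType R) (a b : R) (phi : R -> E) :
  E0 a b phi -> has_ubound [set `|phi t| | t in `[a, b]].
Proof.
move=> hphi.
have /compact_bounded hb := continuous_compact hphi (@segment_compact R a b).
case: hb => M [_ HM].
exists (M + 1) => _ [t ht <-].
apply: (HM (M + 1)); [by rewrite ltrDl | by exists t]. Qed.


Lemma E0B (R : realType) (E : completeNormedModType R) (a b : R) (phi xi : R -> E) :
  E0 a b phi -> E0 a b xi -> E0 a b (phi \- xi).
Proof. by move=> hp hx x; apply: cvgB; [exact: hp | exact: hx]. Qed.

Lemma E0cst (R : realType) (E : completeNormedModType R) (a b : R) (v : E) :
  E0 a b (cst v).
Proof. by move=> x; exact: cvg_cst. Qed.

Lemma le_sup (R : realType) (E : completeNormedModType R) (a b : R) (phi : R -> E) t :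
  E0 a b phi -> `[a, b]%classic t -> `|phi t| <= supnorm a b phi.
Proof.
move=> hp ht; apply: sup_upper_bound; last by exists t.
by split; [exists `|phi t|; exists t | exact: bnd].
Qed.

Lemma K_Rc (R : realType) (E : completeNormedModType R) (a b c : R) (phi : R -> E) v :
  `[a, b]%classic c -> E0 a b phi -> (forall t, t \in `[a, b] -> phi t = v) -> Rc a b c phi.
Proof.
move=> hc hp hv; split => //; rewrite /supnorm.
have -> : [set `|phi t| | t in `[a, b]] = [set `|v|].
  apply/seteqP; split => x.
    by case=> t ht <-; rewrite /= (hv t ht).
  by move=> ->; exists c => //; rewrite (hv c hc).
by rewrite sup1 (hv c hc).
Qed.

Theorem proposition3 (R : realType) (E : completeNormedModType R) (a b c : R)
  (hab : a <= b) (hc : c \in `[a, b])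
  (hadd : forall phi xi : R -> E, Rc a b c phi -> Rc a b c xi -> Rc a b c (phi \- xi)) :
  Rc a b c = Kconst a b :> set (R -> E) /\ D_closed a b (Rc (E:=E) a b c).
Proof.
have hc' : `[a, b]%classic c := hc.
have eqK : Rc a b c = Kconst a b :> set (R -> E).
  apply/seteqP; split => phi.
    case=> hphi hsup; split => //; exists (phi c) => t ht.
    have hK : Rc a b c (cst (phi c)) by apply: (@K_Rc R E a b c (cst (phi c)) (phi c) hc' (@E0cst R E a b (phi c))) => //.
    have [hd hsd] := hadd _ _ (conj hphi hsup) hK.
    have := le_sup _ _ _ _ _ _ hd (ht).
    rewrite hsd /= subrr normr0 normr_le0 subr_eq0 => /eqP //.
  by case=> hphi [v hv]; exact: K_Rc hc' hphi hv.
split => //.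
move=> phi hphi happ; rewrite eqK; split => //; exists (phi c) => t ht.
have ht' := ht.
apply/eqP; rewrite -subr_eq0 -normr_le0; apply/ler_addgt0Pl => e e0.
have [psi hpsi hD] := happ (e / 2) (divr_gt0 e0 (ltr0Sn _ 1)).
move: (hpsi); rewrite eqK => -[hpsiE [v hv]].
have hd := E0B _ _ _ _ _ _ hphi hpsiE.
have h1 := le_sup _ _ _ _ _ _ hd ht'; have h2 := le_sup _ _ _ _ _ _ hd hc'.
rewrite /Dist in hD.
have -> : phi t - phi c = (phi \- psi) t - (phi \- psi) c.
  by rewrite /= (hv t ht) (hv c hc); rewrite opprB addrA subrK.
rewrite addr0; apply: (le_trans (ler_normB _ _)).
have -> : e = e / 2 + e / 2 by rewrite -splitr.
by apply: lerD; apply: ltW; apply: le_lt_trans hD.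
Qed.
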